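(* Consider the connections $\Gamma_1^1$, $\Gamma_2^1(c)$ and $\Gamma_3^1(c)$ for $c\notin\{0,-1\}$, $\Gamma_4^1(c)$ and $\Gamma_5^1(c)$ for $c\in\mathbb R$. Two of these are locally affinely equivalent if and only if one of the following holds: (1) both belong to $\{\Gamma_1^1\}\cup\{\Gamma_4^1(c):c\in\mathbb R\}$ (all of these are mutually affinely equivalent); (2) they are $\Gamma_i^1(c)$ and $\Gamma_j^1(\tilde c)$ with $i,j\in\{2,3\}$ and $c=\tilde c$ or $c=-1-\tilde c$; (3) they are $\Gamma_5^1(c)$ and $\Gamma_5^1(\tilde c)$ with $c=\pm\tilde c$.
   Context: A torsion-free connection has Christoffel symbols $\nabla_{\partial_{x^i}}\partial_{x^j}=\Gamma_{ij}^k\partial_{x^k}$. For real constants, $\Gamma(a,b,c,d,e,f)$ denotes the connection on $\mathbb R^2$ with constant Christoffel symbols $\Gamma_{11}^1=a$, $\Gamma_{11}^2=b$, $\Gamma_{12}^1=\Gamma_{21}^1=c$, $\Gamma_{12}^2=\Gamma_{21}^2=d$, $\Gamma_{22}^1=e$, $\Gamma_{22}^2=f$ (Type $\mathcal A$ connections). Two connections $\nabla,\tilde\nabla$ on $\mathbb R^2$ are (locally) affinely equivalent if there exist open sets $U,V\subset\mathbb R^2$ and a diffeomorphism $T:U\to V$ with $T^*\tilde\nabla=\nabla$ on $U$. The specific connections: $\Gamma_1^1:=\Gamma(-1,0,1,0,0,2)$; $\Gamma_2^1(c):=\Gamma(-1,0,c,0,0,1+2c)$; $\Gamma_3^1(c):=\Gamma(0,0,c,0,0,1+2c)$;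 $\Gamma_4^1(c):=\Gamma(0,0,1,0,c,2)$; $\Gamma_5^1(c):=\Gamma(1,0,0,0,1+c^2,2c)$. *)

(* Defs.v *)
From Stdlib Require Import Reals.
Open Scope R_scope.

Definition pt := (R * R)%type.
Definition dist2 (p q : pt) : R := Rmax (Rabs (fst p - fst q)) (Rabs (snd p - snd q)).

Definition is_open (U : pt -> Prop) : Prop :=
  forall p, U p -> exists r, 0 < r /\ forall q, dist2 q p < r -> U q.

Inductive idx := I1 | I2.
Definition sum2 (f : idx -> R) : R := f I1 + f I2.

Definition coord (k : idx) (p : pt) : R := match k with I1 => fst p | I2 => snd p end.
Definition comp (T : pt -> pt) (k : idx) : pt -> R := fun p => coord k (T p).

Definition is_partial (U : pt -> Prop) (f g : pt -> R) (i : idx) : Prop :=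
  forall p, U p ->
    match i with
    | I1 => derivable_pt_lim (fun t => f (t, snd p)) (fst p) (g p)
    | I2 => derivable_pt_lim (fun t => f (fst p, t)) (snd p) (g p)
    end.

Definition cont_on (U : pt -> Prop) (f : pt -> R) : Prop :=
  forall p, U p -> forall eps, 0 < eps ->
    exists delta, 0 < delta /\ forall q, U q -> dist2 q p < delta -> Rabs (f q - f p) < eps.

Fixpoint Cn (n : nat) (U : pt -> Prop) (f : pt -> R) : Prop :=
  match n with
  | O => cont_on U f
  | S m => cont_on U f /\ forall i, exists g, is_partial U f g i /\ Cn m U g
  end.

Definition smooth_on (U : pt -> Prop) (f : pt -> R) : Prop := forall n, Cn n U f.

Definition diffeo (U V : pt -> Prop) (T : pt -> pt) : Prop :=
  (forall p, U p -> V (T p)) /\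
  exists S : pt -> pt,
    (forall q, V q -> U (S q)) /\
    (forall p, U p -> S (T p) = p) /\
    (forall q, V q -> T (S q) = q) /\
    (forall k, smooth_on U (comp T k)) /\
    (forall k, smooth_on V (comp S k)).

(** Type A connections Gamma(a,b,c,d,e,f) on R^2 (constant Christoffel symbols). *)
Record conn := mkConn { ga : R; gb : R; gc : R; gd : R; ge : R; gf : R }.

(** chr G i j k = Gamma_{ij}^k. *)
Definition chr (G : conn) (i j k : idx) : R :=
  match i, j, k with
  | I1, I1, I1 => ga G
  | I1, I1, I2 => gb G
  | I1, I2, I1 | I2, I1, I1 => gc G
  | I1, I2, I2 | I2, I1, I2 => gd G
  | I2, I2, I1 => ge G
  | I2, I2, I2 => gf G
  end.

(** T^* Gt = G on U, written in coordinates: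
    d_i d_j T^k + Gt_{ab}^k (T x) d_i T^a d_j T^b = G_{ij}^l d_l T^k. *)
Definition pullback_eq (U : pt -> Prop) (T : pt -> pt) (G Gt : conn) : Prop :=
  exists (D : idx -> idx -> pt -> R) (DD : idx -> idx -> idx -> pt -> R),
    (forall k i, is_partial U (comp T k) (D k i) i) /\
    (forall k i j, is_partial U (D k j) (DD k i j) i) /\
    (forall p, U p -> forall i j k,
       DD k i j p + sum2 (fun a => sum2 (fun b => chr Gt a b k * D a i p * D b j p))
       = sum2 (fun l => chr G i j l * D k l p)).

Definition affinely_equiv (G Gt : conn) : Prop :=
  exists (U V : pt -> Prop) (T : pt -> pt),
    is_open U /\ is_open V /\ (exists p, U p) /\ diffeo U V T /\ pullback_eq U T G Gt.

Definition Gamma11 : conn := mkConn (-1) 0 1 0 0 2.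
Definition Gamma21 (c : R) : conn := mkConn (-1) 0 c 0 0 (1 + 2 * c).
Definition Gamma31 (c : R) : conn := mkConn 0 0 c 0 0 (1 + 2 * c).
Definition Gamma41 (c : R) : conn := mkConn 0 0 1 0 c 2.
Definition Gamma51 (c : R) : conn := mkConn 1 0 0 0 (1 + c ^ 2) (2 * c).

Inductive label := L1 | L2 (c : R) | L3 (c : R) | L4 (c : R) | L5 (c : R).

Definition conn_of (l : label) : conn :=
  match l with
  | L1 => Gamma11 | L2 c => Gamma21 c | L3 c => Gamma31 c
  | L4 c => Gamma41 c | L5 c => Gamma51 c
  end.

Definition admissible (l : label) : Prop :=
  match l with
  | L2 c | L3 c => c <> 0 /\ c <> -1
  | _ => True
  end.

Definition in14 (l : label) : Prop := l = L1 \/ exists c, l = L4 c.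
Definition is23 (l : label) (c : R) : Prop := l = L2 c \/ l = L3 c.

Definition equiv_cond (l m : label) : Prop :=
  (in14 l /\ in14 m) \/
  (exists c ct, is23 l c /\ is23 m ct /\ (c = ct \/ c = -1 - ct)) \/
  (exists c ct, l = L5 c /\ m = L5 ct /\ (c = ct \/ c = - ct)).

(* Main.v *)
Require Import Defs.
From Stdlib Require Import Reals Lra Psatz.
Open Scope R_scope.

Lemma dpl_local f g x l : (exists d, 0 < d /\ forall t, Rabs (t - x) < d -> f t = g t) ->
  derivable_pt_lim f x l -> derivable_pt_lim g x l.
Proof.
  intros [d [Hd Hfg]] Hf eps He.
  destruct (Hf eps He) as [del Hdel].
  assert (Hm: 0 < Rmin del d) by (apply Rmin_pos; [apply cond_pos|lra]).
  exists (mkposreal _ Hm). intros h Hh0 Hh. simpl in Hh.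
  assert (H1: Rabs (x + h - x) < d).
  { replace (x + h - x) with h by ring. eapply Rlt_le_trans; [exact Hh| apply Rmin_r]. }
  assert (H2: Rabs (x - x) < d).
  { replace (x - x) with 0 by ring. rewrite Rabs_R0; lra. }
  rewrite <- (Hfg _ H1), <- (Hfg _ H2).
  apply Hdel; auto. eapply Rlt_le_trans; [exact Hh| apply Rmin_l].
Qed.

Lemma dpl_eq f x l l' : derivable_pt_lim f x l -> l = l' -> derivable_pt_lim f x l'.
Proof. intros H ->; exact H. Qed.

Lemma dist2_le1 p q : Rabs (fst q - fst p) <= dist2 q p.
Proof. unfold dist2; apply Rmax_l. Qed.
Lemma dist2_le2 p q : Rabs (snd q - snd p) <= dist2 q p.
Proof. unfold dist2; apply Rmax_r. Qed.
Lemma dist2_lt p q r : Rabs (fst q - fst p) < r -> Rabs (snd q - snd p) < r -> dist2 q p < r.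
Proof. intros; unfold dist2; unfold Rmax; destruct Rle_dec; lra. Qed.

Lemma open_vert U p : is_open U -> U p ->
  exists d, 0 < d /\ forall t, Rabs (t - snd p) < d -> U (fst p, t).
Proof.
  intros HU Hp. destruct (HU p Hp) as [r [Hr H]]. exists r. split; auto.
  intros t Ht. apply H. apply dist2_lt; simpl; auto.
  replace (fst p - fst p) with 0 by ring. rewrite Rabs_R0; lra.
Qed.

Lemma open_hor U p : is_open U -> U p ->
  exists d, 0 < d /\ forall t, Rabs (t - fst p) < d -> U (t, snd p).
Proof.
  intros HU Hp. destruct (HU p Hp) as [r [Hr H]]. exists r. split; auto.
  intros t Ht. apply H. apply dist2_lt; simpl; auto.
  replace (snd p - snd p) with 0 by ring. rewrite Rabs_R0; lra.
Qed.

Lemma cont_const U c : cont_on U (fun _ => c).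
Proof. intros p _ eps He. exists 1. split; [lra|]. intros. replace (c - c) with 0 by ring. rewrite Rabs_R0; lra. Qed.

Lemma cont_ext U f g : (forall p, U p -> f p = g p) -> cont_on U f -> cont_on U g.
Proof.
  intros E Hf p Hp eps He. destruct (Hf p Hp eps He) as [d [Hd H]].
  exists d; split; auto. intros q Hq Hqp. rewrite <- !E; auto.
Qed.

Lemma cont_plus U f g : cont_on U f -> cont_on U g -> cont_on U (fun p => f p + g p).
Proof.
  intros Hf Hg p Hp eps He.
  destruct (Hf p Hp (eps/2)) as [d1 [Hd1 H1]]; [lra|].
  destruct (Hg p Hp (eps/2)) as [d2 [Hd2 H2]]; [lra|].
  exists (Rmin d1 d2). split; [apply Rmin_pos; auto|].
  intros q Hq Hqp.
  assert (A1 := H1 q Hq (Rlt_le_trans _ _ _ Hqp (Rmin_l _ _))).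
  assert (A2 := H2 q Hq (Rlt_le_trans _ _ _ Hqp (Rmin_r _ _))).
  replace (f q + g q - (f p + g p)) with ((f q - f p) + (g q - g p)) by ring.
  eapply Rle_lt_trans; [apply Rabs_triang|]. lra.
Qed.

Lemma mult_bound (a b a0 b0 eta eps : R) : 0 < eta <= 1 ->
  eta * (1 + Rabs a0 + Rabs b0) < eps ->
  Rabs (a - a0) < eta -> Rabs (b - b0) < eta -> Rabs (a * b - a0 * b0) < eps.
Proof.
  intros He Hb Ha Hbb.
  replace (a * b - a0 * b0) with ((a - a0) * (b - b0) + a0 * (b - b0) + (a - a0) * b0) by ring.
  eapply Rle_lt_trans; [apply Rabs_triang|].
  eapply Rle_lt_trans; [apply Rplus_le_compat_r; apply Rabs_triang|].
  rewrite !Rabs_mult.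
  assert (0 <= Rabs (a - a0)) by apply Rabs_pos.
  assert (0 <= Rabs (b - b0)) by apply Rabs_pos.
  assert (0 <= Rabs a0) by apply Rabs_pos.
  assert (0 <= Rabs b0) by apply Rabs_pos.
  assert (Rabs (a - a0) * Rabs (b - b0) <= eta * eta) by (apply Rmult_le_compat; lra).
  assert (Rabs a0 * Rabs (b - b0) <= Rabs a0 * eta) by (apply Rmult_le_compat_l; lra).
  assert (Rabs (a - a0) * Rabs b0 <= eta * Rabs b0) by (apply Rmult_le_compat_r; lra).
  nra.
Qed.

Lemma cont_mult U f g : cont_on U f -> cont_on U g -> cont_on U (fun p => f p * g p).
Proof.
  intros Hf Hg p Hp eps He.
  set (K := 1 + Rabs (f p) + Rabs (g p)).
  assert (HK: 1 <= K) by (unfold K; pose proof (Rabs_pos (f p)); pose proof (Rabs_pos (g p)); lra).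
  set (eta := Rmin 1 (eps / (2 * K))).
  assert (Heta: 0 < eta <= 1).
  { split. apply Rmin_pos; [lra|]. apply Rdiv_lt_0_compat; lra. apply Rmin_l. }
  assert (Hek: eta * K < eps).
  { assert (eta <= eps / (2*K)) by apply Rmin_r.
    assert (eps / (2*K) * K = eps / 2) by (field; lra).
    assert (eta * K <= eps / (2*K) * K) by (apply Rmult_le_compat_r; lra). lra. }
  destruct (Hf p Hp eta) as [d1 [Hd1 H1]]; [lra|].
  destruct (Hg p Hp eta) as [d2 [Hd2 H2]]; [lra|].
  exists (Rmin d1 d2). split; [apply Rmin_pos; auto|].
  intros q Hq Hqp.
  apply (mult_bound _ _ _ _ eta); auto.
  - apply H1; auto. eapply Rlt_le_trans; [exact Hqp| apply Rmin_l].
  - apply H2; auto. eapply Rlt_le_trans; [exact Hqp| apply Rmin_r].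
Qed.

Lemma cont_comp U f h : cont_on U f -> (forall p, U p -> continuity_pt h (f p)) ->
  cont_on U (fun p => h (f p)).
Proof.
  intros Hf Hh p Hp eps He.
  destruct (Hh p Hp eps He) as [a [Ha H]].
  destruct (Hf p Hp a Ha) as [d [Hd H2]].
  exists d. split; auto. intros q Hq Hqp.
  destruct (Req_dec (f q) (f p)) as [E|E].
  - rewrite E. replace (h (f p) - h (f p)) with 0 by ring. rewrite Rabs_R0; lra.
  - apply (H (f q)). split.
    + split; [exact I| auto].
    + apply H2; auto.
Qed.

Lemma clairaut U f g1 g2 h12 h21 p : is_open U -> U p ->
  is_partial U f g1 I1 -> is_partial U f g2 I2 ->
  is_partial U g1 h12 I2 -> is_partial U g2 h21 I1 ->
  cont_on U h12 -> cont_on U h21 -> h12 p = h21 p.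
Proof.
  intros HU Hp Hf1 Hf2 Hg1 Hg2 C1 C2.
  destruct (Req_dec (h12 p) (h21 p)) as [E|E]; auto. exfalso.
  set (eps := Rabs (h12 p - h21 p) / 2).
  assert (He: 0 < eps) by (unfold eps; apply Rdiv_lt_0_compat; [apply Rabs_pos_lt; lra|lra]).
  destruct (C1 p Hp eps He) as [d1 [Hd1 K1]].
  destruct (C2 p Hp eps He) as [d2 [Hd2 K2]].
  destruct (HU p Hp) as [r [Hr KU]].
  set (t := Rmin r (Rmin d1 d2) / 2).
  assert (Ht: 0 < t) by (unfold t; apply Rdiv_lt_0_compat; [repeat apply Rmin_pos; auto|lra]).
  assert (Htr: t < r) by (unfold t; pose proof (Rmin_l r (Rmin d1 d2)); lra).
  assert (Htd1: t < d1) by (unfold t; pose proof (Rmin_r r (Rmin d1 d2)); pose proof (Rmin_l d1 d2); pose proof (Rmin_l r (Rmin d1 d2)); lra).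
  assert (Htd2: t < d2) by (unfold t; pose proof (Rmin_r r (Rmin d1 d2)); pose proof (Rmin_r d1 d2); pose proof (Rmin_l r (Rmin d1 d2)); lra).
  destruct p as [x y]. simpl in *.
  assert (Box: forall a b, x <= a <= x + t -> y <= b <= y + t -> dist2 (a, b) (x, y) <= t).
  { intros a b Ha Hb. unfold dist2; simpl. rewrite !Rabs_right by lra. unfold Rmax; destruct Rle_dec; lra. }
  assert (InU: forall a b, x <= a <= x + t -> y <= b <= y + t -> U (a, b)).
  { intros a b Ha Hb. apply KU. pose proof (Box a b Ha Hb). lra. }
  set (Dl := f (x + t, y + t) - f (x + t, y) - f (x, y + t) + f (x, y)).
  assert (W1: exists a b, x < a < x + t /\ y < b < y + t /\ Dl = h12 (a, b) * (t * t)).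
  { destruct (MVT_cor2 (fun s => f (s, y + t) - f (s, y)) (fun s => g1 (s, y + t) - g1 (s, y)) x (x + t))
      as [a [Ea Ha]]; [lra| |].
    { intros c Hc. apply derivable_pt_lim_minus.
      - apply (Hf1 (c, y + t)). apply InU; lra.
      - apply (Hf1 (c, y)). apply InU; lra. }
    destruct (MVT_cor2 (fun s => g1 (a, s)) (fun s => h12 (a, s)) y (y + t)) as [b [Eb Hb]] ; [lra| |].
    - intros c Hc. apply (Hg1 (a, c)). apply InU; lra.
    - exists a, b. split; auto. split; auto.
      unfold Dl. simpl in Ea, Eb.
      replace (x + t - x) with t in Ea by ring. replace (y + t - y) with t in Eb by ring.
      rewrite <- Rmult_assoc, <- Eb. lra. }
  assert (W2: exists a b, x < a < x + t /\ y < b < y + t /\ Dl = h21 (a, b) * (t * t)).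
  { destruct (MVT_cor2 (fun s => f (x + t, s) - f (x, s)) (fun s => g2 (x + t, s) - g2 (x, s)) y (y + t))
      as [b [Eb Hb]]; [lra| |].
    { intros c Hc. apply derivable_pt_lim_minus.
      - apply (Hf2 (x + t, c)). apply InU; lra.
      - apply (Hf2 (x, c)). apply InU; lra. }
    destruct (MVT_cor2 (fun s => g2 (s, b)) (fun s => h21 (s, b)) x (x + t)) as [a [Ea Ha]] ; [lra| |].
    - intros c Hc. apply (Hg2 (c, b)). apply InU; lra.
    - exists a, b. split; auto. split; auto.
      unfold Dl. simpl in Ea, Eb.
      replace (x + t - x) with t in Ea by ring. replace (y + t - y) with t in Eb by ring.
      rewrite <- Rmult_assoc, <- Ea. lra. }
  destruct W1 as [a1 [b1 [Ha1 [Hb1 E1]]]].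
  destruct W2 as [a2 [b2 [Ha2 [Hb2 E2]]]].
  assert (Q: h12 (a1, b1) = h21 (a2, b2)).
  { assert (0 < t * t) by nra. apply (Rmult_eq_reg_r (t * t)); lra. }
  assert (L1: Rabs (h12 (a1, b1) - h12 (x, y)) < eps).
  { apply K1. apply InU; lra. pose proof (Box a1 b1 ltac:(lra) ltac:(lra)). lra. }
  assert (L2: Rabs (h21 (a2, b2) - h21 (x, y)) < eps).
  { apply K2. apply InU; lra. pose proof (Box a2 b2 ltac:(lra) ltac:(lra)). lra. }
  rewrite Q in L1.
  assert (Rabs (h12 (x,y) - h21 (x,y)) < 2 * eps).
  { replace (h12 (x,y) - h21 (x,y)) with ((h12 (x,y) - h21 (a2,b2)) + (h21 (a2,b2) - h21 (x,y))) by ring.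
    eapply Rle_lt_trans; [apply Rabs_triang|].
    rewrite (Rabs_minus_sym (h12 (x,y))). lra. }
  unfold eps in H. lra.
Qed.

Inductive pexp := PC (r : R) | PV (k l : idx) | PA (a b : pexp) | PM (a b : pexp).

Fixpoint pev (D : idx -> idx -> pt -> R) (e : pexp) (q : pt) : R :=
  match e with
  | PC r => r
  | PV k l => D k l q
  | PA a b => pev D a q + pev D b q
  | PM a b => pev D a q * pev D b q
  end.

Fixpoint pd (F : idx -> idx -> idx -> pexp) (i : idx) (e : pexp) : pexp :=
  match e with
  | PC _ => PC 0
  | PV k l => F k i l
  | PA a b => PA (pd F i a) (pd F i b)
  | PM a b => PA (PM (pd F i a) b) (PM a (pd F i b))
  end.

Lemma pd_ok U D F : (forall k l i, is_partial U (D k l) (pev D (F k i l)) i) ->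
  forall e i, is_partial U (pev D e) (pev D (pd F i e)) i.
Proof.
  intros HD e i. induction e; intros [x y] Hp; destruct i; simpl.
  - apply derivable_pt_lim_const.
  - apply derivable_pt_lim_const.
  - exact (HD k l I1 (x, y) Hp).
  - exact (HD k l I2 (x, y) Hp).
  - exact (derivable_pt_lim_plus _ _ _ _ _ (IHe1 _ Hp) (IHe2 _ Hp)).
  - exact (derivable_pt_lim_plus _ _ _ _ _ (IHe1 _ Hp) (IHe2 _ Hp)).
  - exact (derivable_pt_lim_mult _ _ _ _ _ (IHe1 _ Hp) (IHe2 _ Hp)).
  - exact (derivable_pt_lim_mult _ _ _ _ _ (IHe1 _ Hp) (IHe2 _ Hp)).
Qed.

Lemma pev_cont U D : (forall k l, cont_on U (D k l)) -> forall e, cont_on U (pev D e).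
Proof.
  intros HD e; induction e; simpl.
  - apply cont_const.
  - apply HD.
  - apply cont_plus; auto.
  - apply cont_mult; auto.
Qed.

Definition Fexp (G Gt : conn) (k i j : idx) : pexp :=
  PA (PA (PM (PC (chr G i j I1)) (PV k I1)) (PM (PC (chr G i j I2)) (PV k I2)))
     (PM (PC (-1)) (PA (PA (PM (PM (PC (chr Gt I1 I1 k)) (PV I1 i)) (PV I1 j))
                           (PM (PM (PC (chr Gt I1 I2 k)) (PV I1 i)) (PV I2 j)))
                       (PA (PM (PM (PC (chr Gt I2 I1 k)) (PV I2 i)) (PV I1 j))
                           (PM (PM (PC (chr Gt I2 I2 k)) (PV I2 i)) (PV I2 j))))).

Definition rr (G : conn) : R := ga G * ge G + gc G * gf G - gc G ^ 2.

Lemma partial_unique U f g1 g2 i p : U p -> is_partial U f g1 i -> is_partial U f g2 i -> g1 p = g2 p.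
Proof.
  intros Hp H1 H2. specialize (H1 p Hp). specialize (H2 p Hp).
  destruct i; eapply uniqueness_limite; eauto.
Qed.

Lemma back_main G Gt : gb G = 0 -> gd G = 0 -> gb Gt = 0 -> gd Gt = 0 ->
  rr G <> 0 -> rr Gt <> 0 -> affinely_equiv G Gt ->
  exists s, s <> 0 /\ rr G = rr Gt * s ^ 2 /\ gf G = gf Gt * s.
Proof.
  intros Hb Hd Hbt Hdt Hr Hrt [U [V [Tm [HU [HV [[p0 Hp0] [[HTUV [Sm [HSVU [HST [HTS [HsT HsS]]]]]] [D [DD [HD [HDD Heq]]]]]]]]]]].
  set (FF := Fexp G Gt).
  assert (DDF: forall k i j q, U q -> DD k i j q = pev D (FF k i j) q).
  { intros k i j q Hq. specialize (Heq q Hq i j k). unfold sum2 in Heq; cbv beta in Heq; unfold FF, Fexp; cbn [pev]. rewrite <- Heq. ring. }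
  assert (HDF: forall k l i, is_partial U (D k l) (pev D (FF k i l)) i).
  { intros k l i q Hq. specialize (HDD k i l q Hq). rewrite <- DDF by auto. exact HDD. }
  assert (Dcont: forall k l, cont_on U (D k l)).
  { intros k l. destruct (HsT k 1%nat) as [_ Hg]. destruct (Hg l) as [g [Hgp Hgc]].
    apply (cont_ext U g). - intros q Hq. eapply partial_unique; eauto. - exact Hgc. }
  assert (PD := pd_ok U D FF HDF).
  assert (PCt := pev_cont U D Dcont).
  assert (CL: forall k j q, U q -> pev D (pd FF I2 (FF k I1 j)) q = pev D (pd FF I1 (FF k I2 j)) q).
  { intros k j q Hq.
    apply (clairaut U (D k j) (DD k I1 j) (DD k I2 j)); [exact HU|exact Hq|apply HDD|apply HDD| | |apply PCt|apply PCt].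
    - intros [x y] Hxy. simpl. apply (dpl_local (fun t => pev D (FF k I1 j) (x, t))).
      + destruct (open_vert U (x, y) HU Hxy) as [d [Hd0 Hd1]]. exists d. split; auto.
        intros t Ht. symmetry. apply DDF. apply Hd1; auto.
      + exact (PD (FF k I1 j) I2 (x, y) Hxy).
    - intros [x y] Hxy. simpl. apply (dpl_local (fun t => pev D (FF k I2 j) (t, y))).
      + destruct (open_hor U (x, y) HU Hxy) as [d [Hd0 Hd1]]. exists d. split; auto.
        intros t Ht. symmetry. apply DDF. apply Hd1; auto.
      + exact (PD (FF k I2 j) I1 (x, y) Hxy). }
  assert (H21: forall q, U q -> D I2 I1 q = 0).
  { intros q Hq. pose proof (CL I2 I2 q Hq) as E. unfold FF, Fexp in E. cbn [pd pev chr] in E.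
    rewrite Hb, Hd, Hbt, Hdt in E.
    match type of E with ?a = ?b => assert (Z: a - b = - (rr G * D I2 I1 q)) by (unfold rr; ring) end.
    assert (rr G * D I2 I1 q = 0) by lra.
    apply Rmult_integral in H. destruct H; [contradiction|auto]. }
  assert (H12: forall q, U q -> D I1 I1 q * (rr G - rr Gt * D I2 I2 q ^ 2) = 0).
  { intros q Hq. pose proof (CL I1 I2 q Hq) as E. unfold FF, Fexp in E. cbn [pd pev chr] in E.
    rewrite Hb, Hd, Hbt, Hdt in E. rewrite (H21 q Hq) in E.
    match type of E with ?a = ?b => assert (Z: a - b = - (D I1 I1 q * (rr G - rr Gt * D I2 I2 q ^ 2))) by (unfold rr; ring) end.
    lra. }
  assert (Ex: exists p, U p /\ D I1 I1 p <> 0).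
  { apply Classical_Prop.NNPP. intros Hn.
    assert (Z: forall q, U q -> D I1 I1 q = 0).
    { intros q Hq. apply Classical_Prop.NNPP. intros Hq'. apply Hn. exists q; auto. }
    destruct (open_hor U p0 HU Hp0) as [r [Hr0 Hr1]].
    set (q := (fst p0 + r / 2, snd p0)).
    assert (Cst: forall k, Defs.comp Tm k q = Defs.comp Tm k p0).
    { intros k. destruct (MVT_cor2 (fun t => Defs.comp Tm k (t, snd p0)) (fun t => D k I1 (t, snd p0))
         (fst p0) (fst p0 + r / 2)) as [c [Ec Hc]]; [lra| |].
      - intros c Hc. apply (HD k I1 (c, snd p0)). apply Hr1. rewrite Rabs_right; lra.
      - assert (Hc0: D k I1 (c, snd p0) = 0).
        { assert (U (c, snd p0)) by (apply Hr1; rewrite Rabs_right; lra).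
          destruct k; [apply Z|apply H21]; auto. }
        rewrite Hc0 in Ec. unfold q. destruct p0 as [x0 y0]. simpl in *. lra. }
    assert (ET: Tm q = Tm p0).
    { pose proof (Cst I1) as C1. pose proof (Cst I2) as C2. unfold Defs.comp, coord in C1, C2.
      destruct (Tm q), (Tm p0). simpl in *. subst. auto. }
    assert (Uq: U q). { apply Hr1. unfold q; simpl. rewrite Rabs_right; lra. }
    assert (Eq: q = p0). { rewrite <- (HST q Uq), <- (HST p0 Hp0), ET. auto. }
    assert (fst q = fst p0) by (rewrite Eq; auto). unfold q in H; simpl in H. lra. }
  destruct Ex as [[x y] [Hp Hp1]].
  set (s := D I2 I2 (x, y)).
  assert (Hrs: rr G = rr Gt * s ^ 2).
  { pose proof (H12 _ Hp) as E. apply Rmult_integral in E. destruct E; [contradiction|fold s in H; lra]. }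
  assert (Hs: s <> 0). { intros E. rewrite E in Hrs. apply Hr. rewrite Hrs. ring. }
  exists s. split; auto. split; auto.
  set (e := PM (PV I1 I1) (PA (PC (rr G)) (PM (PC (- rr Gt)) (PM (PV I2 I2) (PV I2 I2))))).
  assert (De: derivable_pt_lim (fun t => pev D e (x, t)) y 0).
  { apply (dpl_local (fun _ => 0)).
    - destruct (open_vert U (x, y) HU Hp) as [d [Hd0 Hd1]]. exists d. split; auto.
      intros t Ht. specialize (Hd1 t Ht). simpl in Hd1. pose proof (H12 _ Hd1) as E.
      unfold e; cbn [pev]. rewrite <- E. ring.
    - apply derivable_pt_lim_const. }
  assert (De2 := PD e I2 (x, y) Hp). simpl in De2.
  pose proof (uniqueness_limite _ _ _ _ De De2) as E.
  unfold e, FF, Fexp in E. cbn [pd pev chr] in E.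
  rewrite ?Hb, ?Hd, ?Hbt, ?Hdt, ?(H21 _ Hp) in E. fold s in E. rewrite ?Hrs in E.
  match type of E with ?a = ?b => assert (Z: b - a = - 2 * rr Gt * D I1 I1 (x, y) * s ^ 2 * (gf G - gf Gt * s)) by ring end.
  assert (Z2: rr Gt * D I1 I1 (x, y) * s ^ 2 * (gf G - gf Gt * s) = 0) by lra.
  apply Rmult_integral in Z2. destruct Z2 as [Z2|Z2]; [|lra].
  exfalso. apply Rmult_integral in Z2. destruct Z2 as [Z2|Z2]; [|apply Hs; nra].
  apply Rmult_integral in Z2. destruct Z2; contradiction.
Qed.

Lemma fwd l m : admissible l -> admissible m -> affinely_equiv (conn_of l) (conn_of m) -> equiv_cond l m.
Proof.
  intros Hl Hm He.
  assert (Hr: forall l, admissible l -> rr (conn_of l) <> 0).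
  { intros [|c|c|c|c] H; unfold rr; simpl in *;
    try (destruct H as [H1 H2]; intro E; assert (Z: c * (c + 1) = 0) by nra;
         apply Rmult_integral in Z; destruct Z; lra); nra. }
  assert (Hb: forall l, gb (conn_of l) = 0) by (intros []; reflexivity).
  assert (Hd: forall l, gd (conn_of l) = 0) by (intros []; reflexivity).
  destruct (back_main _ _ (Hb l) (Hd l) (Hb m) (Hd m) (Hr l Hl) (Hr m Hm) He) as [s [Hs [E1 E2]]].
  assert (s2: 0 < s ^ 2) by (pose proof (Rsqr_pos_lt s Hs) as Q; unfold Rsqr in Q; simpl; lra).
  unfold equiv_cond, in14, is23.
  destruct l as [|c|c|c|c], m as [|c'|c'|c'|c']; unfold rr in E1; simpl in E1, E2;
  try (left; split; [try (left; reflexivity); right; eexists; reflexivity| try (left; reflexivity); right; eexists; reflexivity]);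
  try (exfalso; nra).
  all: try (right; left; exists c, c'; split; [(left; reflexivity) || (right; reflexivity)|split; [(left; reflexivity) || (right; reflexivity)|]];
    assert (Q2: (1 + 2 * c) ^ 2 = ((1 + 2 * c') * s) ^ 2) by (rewrite E2; ring);
    assert (Q3: (4 * (c * c + c) + 1) = (4 * (c' * c' + c') + 1) * s ^ 2) by (ring_simplify; ring_simplify in Q2; lra);
    assert (Q4: c * c + c = (c' * c' + c') * s ^ 2) by (ring_simplify; ring_simplify in E1; lra);
    assert (s ^ 2 = 1) by (rewrite Q4 in Q3; lra);
    assert ((c - c') * (c + c' + 1) = 0) by (rewrite H in Q4; ring_simplify; lra);
    apply Rmult_integral in H0; destruct H0; [left|right]; lra).
  all: try (right; right; exists c, c'; split; [reflexivity|split; [reflexivity|]];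
    assert (Q2: (2 * c) ^ 2 = ((2 * c') * s) ^ 2) by (rewrite E2; ring);
    assert (Q3: c * c = (c' * c') * s ^ 2) by (ring_simplify; ring_simplify in Q2; lra);
    assert (Q4: 1 + c * c = (1 + c' * c') * s ^ 2) by (ring_simplify; ring_simplify in E1; lra);
    assert (s ^ 2 = 1) by (rewrite Q3 in Q4; lra);
    assert ((c - c') * (c + c') = 0) by (rewrite H in Q3; ring_simplify; lra);
    apply Rmult_integral in H0; destruct H0; [left|right]; lra).
Qed.

Inductive ex := EC (r : R) | EX | EY | EA (a b : ex) | EM (a b : ex) | EE (a : ex) | EL (a : ex) | EI (a : ex).

Fixpoint ev (e : ex) (p : pt) : R :=
  match e with
  | EC r => r | EX => fst p | EY => snd p
  | EA a b => ev a p + ev b p | EM a b => ev a p * ev b p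
  | EE a => exp (ev a p) | EL a => ln (ev a p) | EI a => / ev a p
  end.

Fixpoint wfp (e : ex) (p : pt) : Prop :=
  match e with
  | EC _ | EX | EY => True
  | EA a b | EM a b => wfp a p /\ wfp b p
  | EE a => wfp a p
  | EL a => wfp a p /\ 0 < ev a p
  | EI a => wfp a p /\ ev a p <> 0
  end.

Fixpoint dex (i : idx) (e : ex) : ex :=
  match e with
  | EC _ => EC 0
  | EX => match i with I1 => EC 1 | I2 => EC 0 end
  | EY => match i with I1 => EC 0 | I2 => EC 1 end
  | EA a b => EA (dex i a) (dex i b)
  | EM a b => EA (EM (dex i a) b) (EM a (dex i b))
  | EE a => EM (EE a) (dex i a)
  | EL a => EM (dex i a) (EI a)
  | EI a => EM (EC (-1)) (EM (dex i a) (EM (EI a) (EI a)))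
  end.

Lemma wfp_d i e p : wfp e p -> wfp (dex i e) p.
Proof.
  induction e; simpl; intros; try tauto; try (destruct i; simpl; tauto).
  - destruct H as [H1 H2]; repeat split; auto; lra.
Qed.

Lemma dpl_inv f x l : derivable_pt_lim f x l -> f x <> 0 ->
  derivable_pt_lim (fun t => / f t) x (-1 * (l * (/ f x * / f x))).
Proof.
  intros H Hn. apply (dpl_local (fun t => 1 / f t)).
  - exists 1. split; [lra|]. intros. unfold Rdiv. ring.
  - eapply dpl_eq. apply (derivable_pt_lim_div (fct_cte 1) f x 0 l); auto.
    apply derivable_pt_lim_const. unfold fct_cte, Rsqr. field; auto.
Qed.

Lemma dex_ok1 e x y : wfp e (x, y) -> derivable_pt_lim (fun t => ev e (t, y)) x (ev (dex I1 e) (x, y)).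
Proof.
  induction e; simpl; intros W.
  - apply derivable_pt_lim_const.
  - apply derivable_pt_lim_id.
  - apply derivable_pt_lim_const.
  - exact (derivable_pt_lim_plus _ _ _ _ _ (IHe1 (proj1 W)) (IHe2 (proj2 W))).
  - exact (derivable_pt_lim_mult _ _ _ _ _ (IHe1 (proj1 W)) (IHe2 (proj2 W))).
  - eapply dpl_eq. exact (derivable_pt_lim_comp _ exp _ _ _ (IHe W) (derivable_pt_lim_exp _)). simpl. ring.
  - eapply dpl_eq. exact (derivable_pt_lim_comp _ ln _ _ _ (IHe (proj1 W)) (derivable_pt_lim_ln _ (proj2 W))). simpl. ring.
  - exact (dpl_inv _ _ _ (IHe (proj1 W)) (proj2 W)).
Qed.

Lemma dex_ok2 e x y : wfp e (x, y) -> derivable_pt_lim (fun t => ev e (x, t)) y (ev (dex I2 e) (x, y)).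
Proof.
  induction e; simpl; intros W.
  - apply derivable_pt_lim_const.
  - apply derivable_pt_lim_const.
  - apply derivable_pt_lim_id.
  - exact (derivable_pt_lim_plus _ _ _ _ _ (IHe1 (proj1 W)) (IHe2 (proj2 W))).
  - exact (derivable_pt_lim_mult _ _ _ _ _ (IHe1 (proj1 W)) (IHe2 (proj2 W))).
  - eapply dpl_eq. exact (derivable_pt_lim_comp _ exp _ _ _ (IHe W) (derivable_pt_lim_exp _)). simpl. ring.
  - eapply dpl_eq. exact (derivable_pt_lim_comp _ ln _ _ _ (IHe (proj1 W)) (derivable_pt_lim_ln _ (proj2 W))). simpl. ring.
  - exact (dpl_inv _ _ _ (IHe (proj1 W)) (proj2 W)).
Qed.

Lemma dex_partial U e i : (forall p, U p -> wfp e p) -> is_partial U (ev e) (ev (dex i e)) i.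
Proof.
  intros W [x y] Hp. destruct i; simpl.
  - apply dex_ok1; auto.
  - apply dex_ok2; auto.
Qed.

Definition ctp (f : pt -> R) (p : pt) : Prop :=
  forall eps, 0 < eps -> exists d, 0 < d /\ forall q, dist2 q p < d -> Rabs (f q - f p) < eps.

Lemma ctp_plus f g p : ctp f p -> ctp g p -> ctp (fun q => f q + g q) p.
Proof.
  intros Hf Hg eps He.
  destruct (Hf (eps/2)) as [d1 [Hd1 H1]]; [lra|].
  destruct (Hg (eps/2)) as [d2 [Hd2 H2]]; [lra|].
  exists (Rmin d1 d2). split; [apply Rmin_pos; auto|].
  intros q Hqp.
  assert (A1 := H1 q (Rlt_le_trans _ _ _ Hqp (Rmin_l _ _))).
  assert (A2 := H2 q (Rlt_le_trans _ _ _ Hqp (Rmin_r _ _))).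
  replace (f q + g q - (f p + g p)) with ((f q - f p) + (g q - g p)) by ring.
  eapply Rle_lt_trans; [apply Rabs_triang|]. lra.
Qed.

Lemma ctp_mult f g p : ctp f p -> ctp g p -> ctp (fun q => f q * g q) p.
Proof.
  intros Hf Hg eps He.
  set (K := 1 + Rabs (f p) + Rabs (g p)).
  assert (HK: 1 <= K) by (unfold K; pose proof (Rabs_pos (f p)); pose proof (Rabs_pos (g p)); lra).
  set (eta := Rmin 1 (eps / (2 * K))).
  assert (Heta: 0 < eta <= 1).
  { split. apply Rmin_pos; [lra|]. apply Rdiv_lt_0_compat; lra. apply Rmin_l. }
  assert (Hek: eta * K < eps).
  { assert (eta <= eps / (2*K)) by apply Rmin_r.
    assert (eps / (2*K) * K = eps / 2) by (field; lra).
    assert (eta * K <= eps / (2*K) * K) by (apply Rmult_le_compat_r; lra). lra. }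
  destruct (Hf eta) as [d1 [Hd1 H1]]; [lra|].
  destruct (Hg eta) as [d2 [Hd2 H2]]; [lra|].
  exists (Rmin d1 d2). split; [apply Rmin_pos; auto|].
  intros q Hqp.
  apply (mult_bound _ _ _ _ eta); auto.
  - apply H1; auto. eapply Rlt_le_trans; [exact Hqp| apply Rmin_l].
  - apply H2; auto. eapply Rlt_le_trans; [exact Hqp| apply Rmin_r].
Qed.

Lemma ctp_comp f h p : ctp f p -> continuity_pt h (f p) -> ctp (fun q => h (f q)) p.
Proof.
  intros Hf Hh eps He.
  destruct (Hh eps He) as [a [Ha H]].
  destruct (Hf a Ha) as [d [Hd H2]].
  exists d. split; auto. intros q Hqp.
  destruct (Req_dec (f q) (f p)) as [E|E].
  - rewrite E. replace (h (f p) - h (f p)) with 0 by ring. rewrite Rabs_R0; lra.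
  - apply (H (f q)). split.
    + split; [exact I| auto].
    + apply H2; auto.
Qed.

Lemma ev_ctp e p : wfp e p -> ctp (ev e) p.
Proof.
  induction e; simpl; intros W.
  - intros eps He. exists 1. split; [lra|]. intros. replace (r - r) with 0 by ring. rewrite Rabs_R0; lra.
  - intros eps He. exists eps. split; auto. intros q Hq. pose proof (dist2_le1 p q). lra.
  - intros eps He. exists eps. split; auto. intros q Hq. pose proof (dist2_le2 p q). lra.
  - apply ctp_plus; tauto.
  - apply ctp_mult; tauto.
  - apply (ctp_comp (ev e) exp); auto.
    apply derivable_continuous_pt. exists (exp (ev e p)). apply derivable_pt_lim_exp.
  - apply (ctp_comp (ev e) ln); [tauto|].
    apply derivable_continuous_pt. exists (/ ev e p). apply derivable_pt_lim_ln. tauto.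
  - apply (ctp_comp (ev e) Rinv); [tauto|].
    apply (continuity_pt_inv (fun t => t)). apply derivable_continuous_pt. exists 1. apply derivable_pt_lim_id. tauto.
Qed.

Lemma ex_smooth U e : (forall p, U p -> wfp e p) -> smooth_on U (ev e).
Proof.
  intros W n. revert e W. induction n; intros e W; simpl.
  - intros p Hp eps He. destruct (ev_ctp e p (W p Hp) eps He) as [d [Hd H]]. exists d; split; auto.
  - split.
    + intros p Hp eps He. destruct (ev_ctp e p (W p Hp) eps He) as [d [Hd H]]. exists d; split; auto.
    + intros i. exists (ev (dex i e)). split.
      * apply dex_partial; auto.
      * apply IHn. intros p Hp. apply wfp_d; auto.
Qed.

Lemma open_lt0 g : (forall p, wfp g p) -> is_open (fun p => ev g p < 0).
Proof.
  intros W p Hp. destruct (ev_ctp g p (W p) (- ev g p)) as [d [Hd H]]; [lra|].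
  exists d. split; auto. intros q Hq. specialize (H q Hq).
  pose proof (Rle_abs (ev g q - ev g p)). lra.
Qed.

Lemma open_True : is_open (fun _ => True).
Proof. intros p _. exists 1. split; [lra|auto]. Qed.

Definition tk (t1 t2 : ex) (k : idx) : ex := match k with I1 => t1 | I2 => t2 end.

Lemma mk_equiv G Gt (U V : pt -> Prop) (t1 t2 s1 s2 : ex) :
  is_open U -> is_open V -> (exists p, U p) ->
  (forall p, U p -> wfp t1 p /\ wfp t2 p) -> (forall q, V q -> wfp s1 q /\ wfp s2 q) ->
  (forall p, U p -> V (ev t1 p, ev t2 p)) -> (forall q, V q -> U (ev s1 q, ev s2 q)) ->
  (forall p, U p -> ev s1 (ev t1 p, ev t2 p) = fst p /\ ev s2 (ev t1 p, ev t2 p) = snd p) ->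
  (forall q, V q -> ev t1 (ev s1 q, ev s2 q) = fst q /\ ev t2 (ev s1 q, ev s2 q) = snd q) ->
  (forall p, U p -> forall i j k,
     ev (dex i (dex j (tk t1 t2 k))) p
     + sum2 (fun a => sum2 (fun b => chr Gt a b k * ev (dex i (tk t1 t2 a)) p * ev (dex j (tk t1 t2 b)) p))
     = sum2 (fun l => chr G i j l * ev (dex l (tk t1 t2 k)) p)) ->
  affinely_equiv G Gt.
Proof.
  intros HU HV Hne WT WS TUV SVU ST TS EQ.
  exists U, V, (fun p => (ev t1 p, ev t2 p)). repeat split; auto.
  - exists (fun q => (ev s1 q, ev s2 q)). repeat split; auto.
    + intros p Hp. destruct (ST p Hp) as [E1 E2]. rewrite E1, E2. destruct p; auto.
    + intros q Hq. destruct (TS q Hq) as [E1 E2]. rewrite E1, E2. destruct q; auto.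
    + intros [|]; apply ex_smooth; intros p Hp; apply WT; auto.
    + intros [|]; apply ex_smooth; intros p Hp; apply WS; auto.
  - exists (fun k i => ev (dex i (tk t1 t2 k))), (fun k i j => ev (dex i (dex j (tk t1 t2 k)))).
    split; [|split].
    + intros [|] i; apply dex_partial; intros p Hp; apply WT; auto.
    + intros k i j. apply dex_partial. intros p Hp. apply wfp_d. destruct k; apply WT; auto.
    + exact EQ.
Qed.

Definition EN a := EM (EC (-1)) a.

Ltac peq := let p := fresh "p" in let Hp := fresh "Hp" in
  intros [? ?] Hp i j k; destruct i, j, k; unfold sum2; simpl in *.

Lemma inst7 c : affinely_equiv (Gamma21 c) (Gamma31 c).
Proof.
  apply (mk_equiv _ _ (fun _ => True) (fun q => ev EX q < 0)
    (EN (EE (EN EX))) EY (EN (EL (EN EX))) EY).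
  - apply open_True.
  - apply open_lt0. intros; simpl; auto.
  - exists (0,0); auto.
  - intros; simpl; auto.
  - intros [u v] H; simpl in *; repeat split; lra.
  - intros [x y] _; simpl. pose proof (exp_pos (-1 * x)). lra.
  - auto.
  - intros [x y] _; simpl. split; auto.
    replace (-1 * (-1 * exp (-1 * x))) with (exp (-1 * x)) by ring. rewrite ln_exp. ring.
  - intros [u v] H; simpl in *. split; auto.
    replace (-1 * (-1 * ln (-1 * u))) with (ln (-1 * u)) by ring. rewrite exp_ln by lra. ring.
  - peq; ring.
Qed.

Lemma inst_id G : affinely_equiv G G.
Proof.
  apply (mk_equiv _ _ (fun _ => True) (fun _ => True) EX EY EX EY); try apply open_True.
  - exists (0,0); auto.
  - intros; simpl; auto.
  - intros; simpl; auto.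
  - auto.
  - auto.
  - intros [x y] _; simpl; split; ring.
  - intros [x y] _; simpl; split; ring.
  - peq; ring.
Qed.

Lemma inst2 c ct : c = - ct -> affinely_equiv (Gamma51 c) (Gamma51 ct).
Proof.
  intros ->.
  apply (mk_equiv _ _ (fun _ => True) (fun _ => True) EX (EN EY) EX (EN EY)); try apply open_True.
  - exists (0,0); auto.
  - intros; simpl; auto.
  - intros; simpl; auto.
  - auto.
  - auto.
  - intros [x y] _; simpl; split; ring.
  - intros [x y] _; simpl; split; ring.
  - peq; ring.
Qed.

Lemma inst3 c c' : affinely_equiv (Gamma41 c) (Gamma41 c').
Proof.
  apply (mk_equiv _ _ (fun _ => True) (fun _ => True)
     (EA EX (EM (EC ((c - c') / 2)) (EM EY EY))) EY
     (EA EX (EM (EC (- ((c - c') / 2))) (EM EY EY))) EY); try apply open_True.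
  - exists (0,0); auto.
  - intros; simpl; auto.
  - intros; simpl; auto.
  - auto.
  - auto.
  - intros [x y] _; simpl; split; ring.
  - intros [x y] _; simpl; split; ring.
  - peq; field.
Qed.

Lemma inst4 c : affinely_equiv Gamma11 (Gamma41 c).
Proof.
  set (g := EA EX (EM (EC (c / 2)) (EM EY EY))).
  apply (mk_equiv _ _ (fun _ => True) (fun q => ev g q < 0)
     (EA (EN (EE (EN EX))) (EM (EC (- c / 2)) (EM EY EY))) EY
     (EN (EL (EN g))) EY).
  - apply open_True.
  - apply open_lt0. intros; simpl; auto.
  - exists (0,0); auto.
  - intros; simpl; auto.
  - intros [u v] H; unfold g in *; simpl in *; repeat split; lra.
  - intros [x y] _; unfold g; simpl. pose proof (exp_pos (-1 * x)).
    replace (-1 * exp (-1 * x) + - c / 2 * (y * y) + c / 2 * (y * y)) with (-1 * exp (-1 * x)) by field. lra.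
  - auto.
  - intros [x y] _; unfold g; simpl. split; auto.
    replace (-1 * (-1 * exp (-1 * x) + - c / 2 * (y * y) + c / 2 * (y * y))) with (exp (-1 * x)) by field.
    rewrite ln_exp. ring.
  - intros [u v] H; unfold g in *; simpl in *. split; auto.
    replace (-1 * (-1 * ln (-1 * (u + c / 2 * (v * v))))) with (ln (-1 * (u + c / 2 * (v * v)))) by ring.
    rewrite exp_ln by lra. field.
  - peq; field.
Qed.

Lemma inst5 c : affinely_equiv (Gamma41 c) Gamma11.
Proof.
  set (g := EA EX (EM (EC (c / 2)) (EM EY EY))).
  apply (mk_equiv _ _ (fun q => ev g q < 0) (fun _ => True)
     (EN (EL (EN g))) EY
     (EA (EN (EE (EN EX))) (EM (EC (- c / 2)) (EM EY EY))) EY).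
  - apply open_lt0. intros; simpl; auto.
  - apply open_True.
  - exists (-1,0); unfold g; simpl; lra.
  - intros [u v] H; unfold g in *; simpl in *; repeat split; lra.
  - intros; simpl; auto.
  - auto.
  - intros [x y] _; unfold g; simpl. pose proof (exp_pos (-1 * x)).
    replace (-1 * exp (-1 * x) + - c / 2 * (y * y) + c / 2 * (y * y)) with (-1 * exp (-1 * x)) by field. lra.
  - intros [u v] H; unfold g in *; simpl in *. split; auto.
    replace (-1 * (-1 * ln (-1 * (u + c / 2 * (v * v))))) with (ln (-1 * (u + c / 2 * (v * v)))) by ring.
    rewrite exp_ln by lra. field.
  - intros [x y] _; unfold g; simpl. split; auto.
    replace (-1 * (-1 * exp (-1 * x) + - c / 2 * (y * y) + c / 2 * (y * y))) with (exp (-1 * x)) by field.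
    rewrite ln_exp. ring.
  - unfold g. peq; field; lra.
Qed.

Lemma inst6 c ct : c = -1 - ct -> affinely_equiv (Gamma21 c) (Gamma21 ct).
Proof.
  intros ->.
  apply (mk_equiv _ _ (fun _ => True) (fun _ => True) (EA EX EY) (EN EY) (EA EX EY) (EN EY)); try apply open_True.
  - exists (0,0); auto.
  - intros; simpl; auto.
  - intros; simpl; auto.
  - auto.
  - auto.
  - intros [x y] _; simpl; split; ring.
  - intros [x y] _; simpl; split; ring.
  - peq; ring.
Qed.

Lemma inst8 c ct : c = -1 - ct -> affinely_equiv (Gamma21 c) (Gamma31 ct).
Proof.
  intros ->.
  apply (mk_equiv _ _ (fun _ => True) (fun q => ev EX q < 0)
    (EN (EE (EN (EA EX EY)))) (EN EY) (EA EY (EN (EL (EN EX)))) (EN EY)).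
  - apply open_True.
  - apply open_lt0. intros; simpl; auto.
  - exists (0,0); auto.
  - intros; simpl; auto.
  - intros [u v] H; simpl in *; repeat split; lra.
  - intros [x y] _; simpl. pose proof (exp_pos (-1 * (x + y))). lra.
  - auto.
  - intros [x y] _; simpl. split; [|ring].
    replace (-1 * (-1 * exp (-1 * (x + y)))) with (exp (-1 * (x + y))) by ring. rewrite ln_exp. ring.
  - intros [u v] H; simpl in *. split; [|ring].
    replace (-1 * (v + -1 * ln (-1 * u) + -1 * v)) with (ln (-1 * u)) by ring. rewrite exp_ln by lra. ring.
  - peq; ring.
Qed.

Lemma inst9 c ct : c = -1 - ct -> affinely_equiv (Gamma31 c) (Gamma31 ct).
Proof.
  intros ->.
  apply (mk_equiv _ _ (fun _ => True) (fun _ => True)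
    (EM EX (EE (EN EY))) (EN EY) (EM EX (EE (EN EY))) (EN EY)); try apply open_True.
  - exists (0,0); auto.
  - intros; simpl; auto.
  - intros; simpl; auto.
  - auto.
  - auto.
  - intros [x y] _; simpl. split; [|ring].
    rewrite Rmult_assoc, <- exp_plus. replace (-1 * y + -1 * (-1 * y)) with 0 by ring. rewrite exp_0. ring.
  - intros [x y] _; simpl. split; [|ring].
    rewrite Rmult_assoc, <- exp_plus. replace (-1 * y + -1 * (-1 * y)) with 0 by ring. rewrite exp_0. ring.
  - peq; ring.
Qed.

Lemma inst10 c : affinely_equiv (Gamma31 c) (Gamma21 c).
Proof.
  apply (mk_equiv _ _ (fun q => ev EX q < 0) (fun _ => True)
    (EN (EL (EN EX))) EY (EN (EE (EN EX))) EY).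
  - apply open_lt0. intros; simpl; auto.
  - apply open_True.
  - exists (-1,0); simpl; lra.
  - intros [u v] H; simpl in *; repeat split; lra.
  - intros; simpl; auto.
  - auto.
  - intros [x y] _; simpl. pose proof (exp_pos (-1 * x)). lra.
  - intros [u v] H; simpl in *. split; auto.
    replace (-1 * (-1 * ln (-1 * u))) with (ln (-1 * u)) by ring. rewrite exp_ln by lra. ring.
  - intros [x y] _; simpl. split; auto.
    replace (-1 * (-1 * exp (-1 * x))) with (exp (-1 * x)) by ring. rewrite ln_exp. ring.
  - peq; field; lra.
Qed.

Lemma inst11 c ct : c = -1 - ct -> affinely_equiv (Gamma31 c) (Gamma21 ct).
Proof.
  intros ->.
  apply (mk_equiv _ _ (fun q => ev EX q < 0) (fun _ => True)
    (EA EY (EN (EL (EN EX)))) (EN EY) (EN (EE (EN (EA EX EY)))) (EN EY)).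
  - apply open_lt0. intros; simpl; auto.
  - apply open_True.
  - exists (-1,0); simpl; lra.
  - intros [u v] H; simpl in *; repeat split; lra.
  - intros; simpl; auto.
  - auto.
  - intros [x y] _; simpl. pose proof (exp_pos (-1 * (x + y))). lra.
  - intros [u v] H; simpl in *. split; [|ring].
    replace (-1 * (v + -1 * ln (-1 * u) + -1 * v)) with (ln (-1 * u)) by ring. rewrite exp_ln by lra. ring.
  - intros [x y] _; simpl. split; [|ring].
    replace (-1 * (-1 * exp (-1 * (x + y)))) with (exp (-1 * (x + y))) by ring. rewrite ln_exp. ring.
  - peq; field; lra.
Qed.

Lemma bwd l m : equiv_cond l m -> affinely_equiv (conn_of l) (conn_of m).
Proof.
  intros [[H1 H2]|[[c [ct [H1 [H2 H3]]]]|[c [ct [-> [-> H3]]]]]].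
  - destruct H1 as [-> | [c ->]], H2 as [-> | [c' ->]]; simpl;
      [apply inst_id|apply inst4|apply inst5|apply inst3].
  - destruct H1 as [-> | ->], H2 as [-> | ->], H3 as [-> | E]; simpl.
    + apply inst_id.
    + apply inst6; auto.
    + apply inst7.
    + apply inst8; auto.
    + apply inst10.
    + apply inst11; auto.
    + apply inst_id.
    + apply inst9; auto.
  - destruct H3 as [-> | E]; simpl; [apply inst_id|apply inst2; auto].
Qed.

Theorem theorem3p7 (l m : label) :
  admissible l -> admissible m ->
  (affinely_equiv (conn_of l) (conn_of m) <-> equiv_cond l m).
Proof.
  intros Hl Hm. split; [apply fwd; auto|apply bwd].
Qed.
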